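(* Let $(G,\cdot)$ be a loop with identity $e$ and $(H,\cdot)$ a non-trivial subloop such that $(xs\cdot z)s=x(sz\cdot s)$ for all $x,z\in G$, $s\in H$. Let $(U,V,W)\in\mathrm{S_{1st}AUT}(G_H)$, $s_1=eU$ and $s_2=eV$. Then $A=UR_{s_1}^{-1}\in\mathrm{S_{1st}PAUT}(G_H)$ with first Smarandache companion $c=s_1s_2\cdot s_1$ (i.e. $(A,AR_c,AR_c)\in\mathrm{S_{1st}AUT}(G_H)$), and $$(U,V,W)=(A,AR_c,AR_c)\,(R_{s_1}^{-1},L_{s_1}R_{s_1},R_{s_1})^{-1}.$$
   Context: Juxtaposition binds more tightly than $\cdot$. Maps are written on the right and composed left to right; $xR_s=x\cdot s$, $xL_s=s\cdot x$. $SSYM(G_H)$ is the set of bijections $A$ of $G$ with $HA=H$. $\mathrm{S_{1st}AUT}(G_H)$ is the set of triples $(U,V,W)$ with $U,V,W\in SSYM(G_H)$ and $xU\cdot yV=(x\cdot y)W$ for all $x,y\in G$; triples are multiplied componentwise. $\mathrm{S_{1st}PAUT}(G_H)$ is the set of $A\in SSYM(G_H)$ for which there is $c\in H$ with $(A,AR_c,AR_c)\in\mathrm{S_{1st}AUT}(G_H)$; $c$ is called a first Smarandache companion of $A$. *)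

(* Defs.v *)
From mathcomp Require Import ssreflect ssrfun ssrbool.

Set Implicit Arguments.
Unset Strict Implicit.

Section Loops.
Variable G : Type.

(* A loop (G, op) with identity e, presented with its left division
   ldiv a b = a \ b and right division rdiv b a = b / a. *)
Definition is_loop (op : G -> G -> G) (e : G)
  (ldiv rdiv : G -> G -> G) : Prop :=
  (forall x, op e x = x) /\ (forall x, op x e = x) /\
  (forall a b, op a (ldiv a b) = b) /\ (forall a b, ldiv a (op a b) = b) /\
  (forall a b, op (rdiv b a) a = b) /\ (forall a b, rdiv (op b a) a = b).

Definition is_subloop (op : G -> G -> G) (e : G) (ldiv rdiv : G -> G -> G)
  (H : G -> Prop) : Prop :=
  H e /\ (forall x y, H x -> H y -> H (op x y)) /\
  (forall x y, H x -> H y -> H (ldiv x y)) /\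
  (forall x y, H x -> H y -> H (rdiv x y)).

(* Maps are written on the right and composed left to right:
   x (f g) = (x f) g. *)
Definition mcomp (f g : G -> G) : G -> G := fun x => g (f x).

Definition Rt (op : G -> G -> G) (s : G) : G -> G := fun x => op x s.
Definition Lt (op : G -> G -> G) (s : G) : G -> G := fun x => op s x.
Definition Rinv (rdiv : G -> G -> G) (s : G) : G -> G := fun x => rdiv x s.
Definition Linv (ldiv : G -> G -> G) (s : G) : G -> G := fun x => ldiv s x.

Definition SSYM (H : G -> Prop) (A : G -> G) : Prop :=
  bijective A /\ (forall y, H y <-> exists x, H x /\ A x = y).

Definition S1AUT (op : G -> G -> G) (H : G -> Prop) (U V W : G -> G) : Prop :=
  SSYM H U /\ SSYM H V /\ SSYM H W /\
  (forall x y, op (U x) (V y) = W (op x y)).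

Definition first_companion (op : G -> G -> G) (H : G -> Prop) (A : G -> G)
  (c : G) : Prop :=
  H c /\ S1AUT op H A (mcomp A (Rt op c)) (mcomp A (Rt op c)).

Definition S1PAUT (op : G -> G -> G) (H : G -> Prop) (A : G -> G) : Prop :=
  SSYM H A /\ exists c, first_companion op H A c.

Definition tmul (T1 T2 : (G -> G) * (G -> G) * (G -> G)) :=
  let: (a1, b1, c1) := T1 in let: (a2, b2, c2) := T2 in
  (mcomp a1 a2, mcomp b1 b2, mcomp c1 c2).

End Loops.

(* Main.v *)
Require Import Defs.
From mathcomp Require Import ssreflect ssrfun ssrbool.
From Stdlib Require Import FunctionalExtensionality.

Lemma SSYM_comp (G : Type) (H : G -> Prop) (f g : G -> G) :
  SSYM H f -> SSYM H g -> SSYM H (mcomp f g).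
Proof.
move=> [bf hf] [bg hg]; split.
  by apply: (bij_comp bg bf).
move=> y; split.
  move=> /hg [x' [Hx' <-]]; move: Hx' => /hf [x [Hx <-]].
  by exists x.
move=> [x [Hx <-]]; rewrite /mcomp; apply/hg; exists (f x); split => //.
by apply/hf; exists x.
Qed.

Lemma SSYM_Rt (G : Type) op e ldiv rdiv (H : G -> Prop) s :
  is_loop op e ldiv rdiv -> is_subloop op e ldiv rdiv H -> H s ->
  SSYM H (Rt op s) /\ SSYM H (Rinv rdiv s).
Proof.
move=> [l1 [l2 [l3 [l4 [l5 l6]]]]] [h1 [h2 [h3 h4]]] Hs; split; split.
- exists (Rinv rdiv s) => x; rewrite /Rt /Rinv //.
- move=> y; split.
    by move=> Hy; exists (rdiv y s); split; [apply: h4|rewrite /Rt l5].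
  by move=> [x [Hx <-]]; apply: h2.
- exists (Rt op s) => x; rewrite /Rt /Rinv //.
- move=> y; split.
    by move=> Hy; exists (op y s); split; [apply: h2|rewrite /Rinv l6].
  by move=> [x [Hx <-]]; apply: h4.
Qed.

Theorem theorem3p7 (G : Type) (op : G -> G -> G) (e : G)
  (ldiv rdiv : G -> G -> G) (H : G -> Prop)
  (hG : is_loop op e ldiv rdiv)
  (hH : is_subloop op e ldiv rdiv H)
  (hnt : exists h, H h /\ h <> e)
  (hid : forall x z s, H s ->
     op (op (op x s) z) s = op x (op (op s z) s))
  (U V W : G -> G)
  (hUVW : S1AUT op H U V W) :
  let s1 := U e in
  let s2 := V e in
  let A := mcomp U (Rinv rdiv s1) in
  let c := op (op s1 s2) s1 in
  S1PAUT op H A /\ first_companion op H A c /\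
  (U, V, W) =
    tmul (A, mcomp A (Rt op c), mcomp A (Rt op c))
      (* (R_{s1}^{-1}, L_{s1} R_{s1}, R_{s1})^{-1}
         = (R_{s1}, R_{s1}^{-1} L_{s1}^{-1}, R_{s1}^{-1}) *)
      (Rt op s1, mcomp (Rinv rdiv s1) (Linv ldiv s1), Rinv rdiv s1).
Proof.
move=> s1 s2 A c.
have hG' := hG; have hH' := hH.
move: hG => [l1 [l2 [l3 [l4 [l5 l6]]]]].
move: hH => [h1 [h2 [h3 h4]]].
move: hUVW => [sU [sV [sW hm]]].
have Hs1 : H s1 by case: sU => _ /(_ s1) [_ P]; apply: P; exists e.
have Hs2 : H s2 by case: sV => _ /(_ s2) [_ P]; apply: P; exists e.
have Hc : H c by apply: (h2 _ _ (h2 _ _ Hs1 Hs2) Hs1).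
have WV : forall y, W y = op s1 (V y) by move=> y; have := hm e y; rewrite l1 => <-.
have WU : forall x, W x = op (U x) s2 by move=> x; have := hm x e; rewrite l2 => <-.
have UA : forall x, U x = op (A x) s1 by move=> x; rewrite /A /mcomp /Rinv l5.
have sA : SSYM H A by apply: SSYM_comp => //; case: (SSYM_Rt _ _ _ _ _ _ _ hG' hH' Hs1).
have sAc : SSYM H (mcomp A (Rt op c)).
  by apply: SSYM_comp => //; case: (SSYM_Rt _ _ _ _ _ _ _ hG' hH' Hc).
have key : forall x, op (A x) c = op (W x) s1.
  by move=> x; rewrite WU UA hid.
have fc : first_companion op H A c.
  split=> //; split=> //; split=> //; split=> //.
  move=> x y; rewrite /mcomp /Rt.
  by rewrite (key (op x y)) -hm UA hid // -WV -key.
split; first by split=> //; exists c.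
split=> //.
rewrite /tmul; f_equal; [f_equal|]; apply: functional_extensionality => x;
  rewrite /mcomp /Rt /Rinv /Linv.
- by rewrite -UA.
- rewrite key l6 WV l4 //.
- by rewrite -/(Rt op c (A x)) /Rt key l6.
Qed.
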